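(* If $G$ and $H$ are connected graphs, then $\mathrm{gp}(G\boxtimes H)\ge \mathrm{gp}(G)\,\mathrm{gp}(H)$.
   Context: All graphs are finite and simple. The strong product $G\boxtimes H$ has vertex set $V(G)\times V(H)$, with distinct $(g,h),(g',h')$ adjacent iff ($g=g'$ or $gg'\in E(G)$) and ($h=h'$ or $hh'\in E(H)$). For a connected graph $G$, a set $S\subseteq V(G)$ is a general position set if no three pairwise distinct vertices of $S$ lie on a common geodesic (shortest path); $\mathrm{gp}(G)$ is the maximum cardinality of a general position set. *)

(* Defs.v *)
From mathcomp Require Import all_boot.
From mathcomp Require Import boolp.
Set Implicit Arguments. Unset Strict Implicit. Unset Printing Implicit Defensive.

Definition simple_graph (T : finType) (e : rel T) : Prop :=
  symmetric e /\ irreflexive e.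

Definition connected_graph (T : finType) (e : rel T) : Prop :=
  forall x y : T, connect e x y.

(* A walk is given by its start x and the rest p (vertex list x :: p),
   with consecutive vertices adjacent; its length is size p.
   It is a geodesic (shortest path) if no walk with the same endpoints is
   shorter. *)
Definition geodesic (T : finType) (e : rel T) (x : T) (p : seq T) : Prop :=
  path e x p /\
  forall q : seq T, path e x q -> last x q = last x p -> size p <= size q.

Definition gp_set (T : finType) (e : rel T) (S : {set T}) : Prop :=
  forall u v w : T, u \in S -> v \in S -> w \in S ->
    u != v -> v != w -> u != w ->
    ~ (exists (x : T) (p : seq T),
         geodesic e x p /\ u \in x :: p /\ v \in x :: p /\ w \in x :: p).

Definition gp (T : finType) (e : rel T) : nat :=
  \max_(S : {set T} | `[< gp_set e S >]) #|S|.

Definition strong_prod (T1 T2 : finType) (e1 : rel T1) (e2 : rel T2)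
  : rel (T1 * T2)%type :=
  fun x y => [&& x != y,
                 (x.1 == y.1) || e1 x.1 y.1 &
                 (x.2 == y.2) || e2 x.2 y.2].

(* Main.v *)
Require Import Defs.
From mathcomp Require Import all_boot.
From mathcomp Require Import boolp zify.
Set Implicit Arguments. Unset Strict Implicit. Unset Printing Implicit Defensive.

Section Dist.
Variables (T : finType) (e : rel T).
Hypothesis conn : connected_graph e.

Definition walkn x y n := exists p, path e x p /\ last x p = y /\ size p = n.

Definition dist x y : nat :=
  match pselect (exists n, `[< walkn x y n >]) with
  | left H => ex_minn H
  | right _ => 0 end.

Lemma dist_spec x y : walkn x y (dist x y) /\ forall n, walkn x y n -> dist x y <= n.
Proof.
have ex : exists n, `[< walkn x y n >].
  have /connectP [p pp ->] := conn x y.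
  by exists (size p); apply/asboolP; exists p.
rewrite /dist; case: pselect => [H|//]; case: ex_minnP => m /asboolP Hm Hmin.
by split=> // n Hn; apply: Hmin; apply/asboolP.
Qed.

Lemma dist_le x p : path e x p -> dist x (last x p) <= size p.
Proof. move=> pp; apply: (proj2 (dist_spec _ _)); by exists p. Qed.

Lemma dist_walk x y : exists p, path e x p /\ last x p = y /\ size p = dist x y.
Proof. exact: (proj1 (dist_spec x y)). Qed.

Lemma dist_xx x : dist x x = 0.
Proof. by have := @dist_le x [::] isT; rewrite leqn0 => /eqP. Qed.

Lemma dist0 x y : dist x y = 0 -> x = y.
Proof.
case: (dist_walk x y) => p [pp [lp sp]] d0.
rewrite d0 in sp; by case: p pp lp sp => //= _ <-.
Qed.

Lemma dist_tri x y z : dist x z <= dist x y + dist y z.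
Proof.
case: (dist_walk x y) => p [pp [lp sp]]; case: (dist_walk y z) => q [pq [lq sq]].
have := @dist_le x (p ++ q).
by rewrite cat_path last_cat lp pp pq lq size_cat sp sq; apply.
Qed.

Lemma dist_le1 x y : (x == y) || e x y -> dist x y <= 1.
Proof.
case/orP => [/eqP->|exy]; first by rewrite dist_xx.
by have := @dist_le x [:: y]; rewrite /= exy; apply.
Qed.

Lemma dist_step x y : exists z, [/\ (x == z) || e x z, dist z y <= (dist x y).-1 & (x != y -> e x z)].
Proof.
case: (eqVneq x y) => [<-|nxy].
  by exists x; rewrite eqxx dist_xx.
case: (dist_walk x y) => [[|z p] [pp [lp sp]]].
  by rewrite /= in lp; rewrite lp eqxx in nxy.
move: pp => /= /andP [exz pz]; exists z; split => //; first by rewrite exz orbT.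
by rewrite -sp /= -lp; exact: dist_le.
Qed.

Lemma geoE x p : geodesic e x p -> size p = dist x (last x p).
Proof.
case=> pp min; apply/eqP; rewrite eqn_leq dist_le // andbT.
case: (dist_walk x (last x p)) => q [pq [lq sq]]; rewrite -sq; exact: min.
Qed.

Lemma geo_of x p : path e x p -> size p = dist x (last x p) -> geodesic e x p.
Proof. move=> pp sp; split=> // q pq lq; rewrite sp -lq; exact: dist_le. Qed.

Lemma path_seg x p k m : path e x p -> k + m <= size p ->
  dist (nth x (x :: p) k) (nth x (x :: p) (k + m)) <= m.
Proof.
move=> /(pathP x) H; elim: m => [|m IH] hkm; first by rewrite addn0 dist_xx.
apply: (leq_trans (dist_tri _ (nth x (x::p) (k+m)) _)).
rewrite addnS -[m.+1]addn1; apply: leq_add; first by apply: IH; lia.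
apply: dist_le1; rewrite /= H ?orbT //; lia.
Qed.

Lemma path_seg2 x p i j : path e x p -> i <= j -> j <= size p ->
  dist (nth x (x :: p) i) (nth x (x :: p) j) <= j - i.
Proof.
move=> pp ij jn; have := @path_seg x p i (j - i) pp; rewrite subnKC //; apply; lia.
Qed.

Lemma geo_seg x p i j k : geodesic e x p -> i < j -> j < k -> k <= size p ->
  dist (nth x (x :: p) i) (nth x (x :: p) k) =
  dist (nth x (x :: p) i) (nth x (x :: p) j) + dist (nth x (x :: p) j) (nth x (x :: p) k).
Proof.
move=> g ij jk kn; have pp := g.1.
have E := geoE g.
have L : last x p = nth x (x :: p) (size p) by rewrite (@nth_last _ x (x :: p)).
rewrite L in E.
have h0 := path_seg2 pp (leq0n i) (leq_trans (ltnW ij) (leq_trans (ltnW jk) kn)).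
have h1 := path_seg2 pp (ltnW ij) (leq_trans (ltnW jk) kn).
have h2 := path_seg2 pp (ltnW jk) kn.
have h3 := path_seg2 pp kn (leqnn _).
have t1 := dist_tri (nth x (x :: p) 0) (nth x (x :: p) i) (nth x (x :: p) (size p)).
have t2 := dist_tri (nth x (x :: p) i) (nth x (x :: p) k) (nth x (x :: p) (size p)).
have t3 := dist_tri (nth x (x :: p) i) (nth x (x :: p) j) (nth x (x :: p) k).
simpl in E, h0, t1. lia.
Qed.

Lemma through (S : {set T}) g1 g2 g3 : gp_set e S -> g1 \in S -> g2 \in S -> g3 \in S ->
  g1 != g2 -> g2 != g3 -> g1 != g3 -> dist g1 g3 = dist g1 g2 + dist g2 g3 -> False.
Proof.
move=> gS h1 h2 h3 n12 n23 n13 d.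
case: (dist_walk g1 g2) => p [pp [lp sp]]; case: (dist_walk g2 g3) => q [pq [lq sq]].
apply: (gS g1 g2 g3) => //; exists g1, (p ++ q); split; last split; last split.
- apply: geo_of; first by rewrite cat_path pp lp pq.
  by rewrite size_cat last_cat lp lq sp sq d.
- by rewrite mem_head.
- by rewrite -cat_cons mem_cat -lp mem_last.
- by rewrite -lq -lp -last_cat mem_last.
Qed.

Lemma half (S : {set T}) g1 g2 g3 a2 b2 c2 : gp_set e S -> g1 \in S -> g2 \in S -> g3 \in S ->
  maxn (dist g1 g3) c2 = maxn (dist g1 g2) a2 + maxn (dist g2 g3) b2 ->
  c2 <= dist g1 g3 ->
  ~ (dist g1 g2 = 0 /\ a2 = 0) -> ~ (dist g2 g3 = 0 /\ b2 = 0) -> False.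
Proof.
move=> gS h1 h2 h3 E c2le n1 n2.
have tri := dist_tri g1 g2 g3.
have [E1 [a2le b2le]] : dist g1 g3 = dist g1 g2 + dist g2 g3 /\ a2 <= dist g1 g2 /\ b2 <= dist g2 g3 by lia.
case: (eqVneq g1 g2) => [e12|n12].
  by apply: n1; rewrite e12 dist_xx in a2le *; split; lia.
case: (eqVneq g2 g3) => [e23|n23].
  by apply: n2; rewrite e23 dist_xx in b2le *; split; lia.
case: (eqVneq g1 g3) => [e13|n13].
  by apply: n1; rewrite e13 dist_xx in E1; split; lia.
exact: (through gS h1 h2 h3 n12 n23 n13 E1).
Qed.

End Dist.

Lemma proj_walk (T U : finType) (e : rel T) (f : rel U) (pr : U -> T) :
  connected_graph e -> (forall x y, f x y -> (pr x == pr y) || e (pr x) (pr y)) ->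
  forall x q, path f x q -> dist e (pr x) (pr (last x q)) <= size q.
Proof.
move=> conn H x q; elim: q x => [|y q IH] x /=; first by rewrite dist_xx.
case/andP=> fxy pq; apply: leq_trans (dist_tri conn _ (pr y) _) _.
rewrite -add1n; apply: leq_add; [exact: dist_le1 (H _ _ fxy) | exact: IH].
Qed.

Section Prod.
Variables (T1 T2 : finType) (e1 : rel T1) (e2 : rel T2).
Hypotheses (s1 : simple_graph e1) (s2 : simple_graph e2)
  (c1 : connected_graph e1) (c2 : connected_graph e2).
Local Notation ep := (strong_prod e1 e2).
Local Notation d1 := (dist e1).
Local Notation d2 := (dist e2).

Lemma prod_walk n : forall x y : T1 * T2, maxn (d1 x.1 y.1) (d2 x.2 y.2) <= n ->
  exists q, [/\ path ep x q, last x q = y & size q <= n].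
Proof.
elim: n => [|n IH] [x1 x2] [y1 y2] /=.
  move=> h; have h1 : d1 x1 y1 = 0 by lia.
  have h2 : d2 x2 y2 = 0 by lia.
  by exists [::]; rewrite (dist0 c1 h1) (dist0 c2 h2).
move=> hn.
case: (eqVneq (x1, x2) (y1, y2)) => [->|nxy]; first by exists [::].
have [z1 [ez1 dz1 nz1]] := dist_step c1 x1 y1.
have [z2 [ez2 dz2 nz2]] := dist_step c2 x2 y2.
have [q [pq lq sq]] := IH (z1, z2) (y1, y2) ltac:(simpl; lia).
exists ((z1, z2) :: q); split => //=.
rewrite pq andbT /strong_prod /= ez1 ez2 andbT.
move: nxy; rewrite xpair_eqE negb_and => /orP [n1|n2].
- rewrite andbT; apply/negP => /eqP [E _]; move: (nz1 n1); rewrite -E; by case: s1 => _ ->.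
- rewrite andbT; apply/negP => /eqP [_ E]; move: (nz2 n2); rewrite -E; by case: s2 => _ ->.
Qed.

Lemma prod_conn : connected_graph ep.
Proof.
move=> x y; have [q [pq lq _]] := prod_walk (leqnn (maxn (d1 x.1 y.1) (d2 x.2 y.2))).
by apply/connectP; exists q; rewrite ?lq.
Qed.

Lemma dist_prod x y : dist ep x y = maxn (d1 x.1 y.1) (d2 x.2 y.2).
Proof.
apply/eqP; rewrite eqn_leq; apply/andP; split.
  have [q [pq lq sq]] := prod_walk (leqnn (maxn (d1 x.1 y.1) (d2 x.2 y.2))).
  apply: leq_trans sq; rewrite -lq; exact: (@dist_le _ _ prod_conn x q pq).
have [q [pq [lq sq]]] := dist_walk prod_conn x y.
rewrite -sq geq_max -lq; apply/andP; split.
  apply: (@proj_walk _ _ e1 ep fst c1 _ x q pq); by move=> a b /and3P [].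
apply: (@proj_walk _ _ e2 ep snd c2 _ x q pq); by move=> a b /and3P [].
Qed.

Lemma core (S1 : {set T1}) (S2 : {set T2}) a b c :
  gp_set e1 S1 -> gp_set e2 S2 -> a \in setX S1 S2 -> b \in setX S1 S2 -> c \in setX S1 S2 ->
  a != b -> b != c -> dist ep a c = dist ep a b + dist ep b c -> False.
Proof.
move=> g1 g2; case: a => [a1 a2]; case: b => [b1 b2]; case: c => [k1 k2].
rewrite !in_setX /= => /andP [ha1 ha2] /andP [hb1 hb2] /andP [hc1 hc2] nab nbc.
rewrite !dist_prod /= => E.
have nab' : ~ (d1 a1 b1 = 0 /\ d2 a2 b2 = 0).
  by case=> /(dist0 c1) h1 /(dist0 c2) h2; rewrite h1 h2 eqxx in nab.
have nbc' : ~ (d1 b1 k1 = 0 /\ d2 b2 k2 = 0).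
  by case=> /(dist0 c1) h1 /(dist0 c2) h2; rewrite h1 h2 eqxx in nbc.
case: (leqP (d2 a2 k2) (d1 a1 k1)) => h.
  exact: (half c1 g1 ha1 hb1 hc1 E h nab' nbc').
apply: (half c2 g2 ha2 hb2 hc2 _ (ltnW h)).
- by rewrite maxnC E maxnC (maxnC (d1 b1 k1)).
- by case=> ? ?; apply: nab'.
- by case=> ? ?; apply: nbc'.
Qed.

Lemma gp_setX S1 S2 : gp_set e1 S1 -> gp_set e2 S2 -> gp_set ep (setX S1 S2).
Proof.
move=> g1 g2 u v w hu hv hw nuv nvw nuw [x [p [geo [mu [mv mw]]]]].
set s := x :: p.
have pos z : z \in s -> index z s <= size p /\ nth x s (index z s) = z.
  move=> hz; split; last exact: nth_index.
  by have := index_mem z s; rewrite hz /= ltnS.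
have seg a b c : a \in s -> b \in s -> c \in s -> index a s < index b s ->
    index b s < index c s -> a \in setX S1 S2 -> b \in setX S1 S2 -> c \in setX S1 S2 ->
    a != b -> b != c -> False.
  move=> ma mb mc ab bc ha hb hc nab nbc.
  have [_ na] := pos a ma; have [_ nb] := pos b mb; have [ic nc] := pos c mc.
  apply: (core g1 g2 ha hb hc nab nbc).
  by have := @geo_seg _ _ prod_conn x p _ _ _ geo ab bc ic; rewrite -/s na nb nc.
have [_ nu] := pos u mu; have [_ nv] := pos v mv; have [_ nw] := pos w mw.
have duv : index u s != index v s by apply/eqP => E; move: nuv; rewrite -nu -nv E eqxx.
have dvw : index v s != index w s by apply/eqP => E; move: nvw; rewrite -nw -nv E eqxx.
have duw : index u s != index w s by apply/eqP => E; move: nuw; rewrite -nu -nw E eqxx.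
have nvu : v != u by rewrite eq_sym.
have nwv : w != v by rewrite eq_sym.
have nwu : w != u by rewrite eq_sym.
case: (ltngtP (index u s) (index v s)) duv => // uv _;
case: (ltngtP (index v s) (index w s)) dvw => // vw _;
case: (ltngtP (index u s) (index w s)) duw => // uw _.
all: first [ by apply: (seg u v w) | by apply: (seg u w v) | by apply: (seg v u w)
           | by apply: (seg v w u) | by apply: (seg w u v) | by apply: (seg w v u) | lia ].
Qed.

End Prod.

Lemma gp_exists (T : finType) (e : rel T) : exists2 S : {set T}, gp_set e S & #|S| = gp e.
Proof.
rewrite /gp; apply: (big_rec (fun n => exists2 S : {set T}, gp_set e S & #|S| = n)).
  by exists set0; [move=> u; rewrite in_set0 | rewrite cards0].
move=> S n /asboolP HS [S' HS' <-].
case: (leqP #|S| #|S'|) => h.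
  by exists S'; rewrite // maxn_idPr.
by exists S; rewrite // maxn_idPl // ltnW.
Qed.

Theorem theorem4p2 (T1 T2 : finType) (e1 : rel T1) (e2 : rel T2) :
  simple_graph e1 -> simple_graph e2 ->
  connected_graph e1 -> connected_graph e2 ->
  gp e1 * gp e2 <= gp (strong_prod e1 e2).
Proof.
move=> s1 s2 c1 c2.
have [S1 g1 <-] := gp_exists e1; have [S2 g2 <-] := gp_exists e2.
rewrite -cardsX; apply: (leq_bigmax_cond (setX S1 S2)); apply/asboolP.
exact: gp_setX.
Qed.
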